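(* Let $\mathcal{A}\in\mathbb{C}^{I_{1\ldots N}\times I_{1\ldots N}}$ and let $\mathcal{N}\in\mathbb{C}^{I_{1\ldots N}\times I_{1\ldots N}}$ be a Hermitian positive definite tensor. Put $\tilde{\mathcal{A}}=\mathcal{N}^{1/2}*_N\mathcal{A}*_N\mathcal{N}^{-1/2}$. Then: (i) $\mathcal{A}=\mathcal{A}^{\#}_{\mathcal{N}\mathcal{N}}$ if and only if $\tilde{\mathcal{A}}=\tilde{\mathcal{A}}^H$; (ii) $\mathcal{A}*_N\mathcal{A}^{\#}_{\mathcal{N}\mathcal{N}}=\mathcal{A}^{\#}_{\mathcal{N}\mathcal{N}}*_N\mathcal{A}$ if and only if $\tilde{\mathcal{A}}*_N\tilde{\mathcal{A}}^H=\tilde{\mathcal{A}}^H*_N\tilde{\mathcal{A}}$; (iii) $\mathcal{A}^{\dagger}_{\mathcal{N},\mathcal{N}}*_N(\mathcal{A}^{\dagger}_{\mathcal{N},\mathcal{N}})^{\#}_{\mathcal{N}\mathcal{N}}=(\mathcal{A}^{\dagger}_{\mathcal{N},\mathcal{N}})^{\#}_{\mathcal{N}\mathcal{N}}*_N\mathcal{A}^{\dagger}_{\mathcal{N},\mathcal{N}}$ if and only if $\tilde{\mathcal{A}}^{\dagger}*_N(\tilde{\mathcal{A}}^{\dagger})^H=(\tilde{\mathcal{A}}^{\dagger})^H*_N\tilde{\mathcal{A}}^{\dagger}$; (iv) $\mathcal{A}*_N\mathcal{A}^{\#}_{\mathcal{N}\mathcal{N}}=\mathcal{A}^{\#}_{\mathcal{N}\mathcal{N}}*_N\mathcal{A}$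 if and only if $\mathcal{A}^{\dagger}_{\mathcal{N},\mathcal{N}}*_N(\mathcal{A}^{\dagger}_{\mathcal{N},\mathcal{N}})^{\#}_{\mathcal{N}\mathcal{N}}=(\mathcal{A}^{\dagger}_{\mathcal{N},\mathcal{N}})^{\#}_{\mathcal{N}\mathcal{N}}*_N\mathcal{A}^{\dagger}_{\mathcal{N},\mathcal{N}}$.
   Context: Write $I_{1\ldots N}$ for $I_1\times\cdots\times I_N$. Einstein product: $(\mathcal{A}*_N\mathcal{B})_{i_1\ldots i_Mj_1\ldots j_L}=\sum_{k_1,\ldots,k_N}a_{i_1\ldots i_Mk_1\ldots k_N}b_{k_1\ldots k_Nj_1\ldots j_L}$. $\mathcal{A}^H$ is the conjugate transpose (entries $\overline{a_{i_1\ldots i_Nj_1\ldots j_N}}$ at position $(j_1,\ldots,j_N,i_1,\ldots,i_N)$). Identity tensor: entry 1 where the two index blocks coincide, 0 otherwise; inverses are with respect to $*_N$. $\mathcal{N}$ is Hermitian positive definite if $\mathcal{N}^H=\mathcal{N}$ and $\mathcal{X}^H*_N\mathcal{N}*_N\mathcal{X}>0$ for all nonzero $\mathcal{X}\in\mathbb{C}^{I_{1\ldots N}}$; $\mathcal{N}^{1/2}$ is its unique Hermitian positive definite square root ($\mathcal{N}^{1/2}*_N\mathcal{N}^{1/2}=\mathcal{N}$) and $\mathcal{N}^{-1/2}=(\mathcal{N}^{1/2})^{-1}$. Weighted conjugate transpose: $\mathcal{A}^{\#}_{\mathcal{N}\mathcal{N}}=\mathcal{N}^{-1}*_N\mathcal{A}^H*_N\mathcal{N}$.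 Weighted Moore-Penrose inverse $\mathcal{A}^{\dagger}_{\mathcal{M},\mathcal{N}}$ (for Hermitian positive definite $\mathcal{M},\mathcal{N}$): the unique $\mathcal{X}$ with $\mathcal{A}*_N\mathcal{X}*_N\mathcal{A}=\mathcal{A}$, $\mathcal{X}*_N\mathcal{A}*_N\mathcal{X}=\mathcal{X}$, $(\mathcal{M}*_N\mathcal{A}*_N\mathcal{X})^H=\mathcal{M}*_N\mathcal{A}*_N\mathcal{X}$, $(\mathcal{N}*_N\mathcal{X}*_N\mathcal{A})^H=\mathcal{N}*_N\mathcal{X}*_N\mathcal{A}$; $\mathcal{A}^{\dagger}$ (Moore-Penrose inverse) is the case of identity weights. *)

(* Defs.v *)
From HB Require Import structures.
From mathcomp Require Import all_boot all_order all_algebra.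
From Stdlib Require Import ClassicalEpsilon.
Set Implicit Arguments. Unset Strict Implicit. Unset Printing Implicit Defensive.
Import Order.TTheory GRing.Theory Num.Theory.
Local Open Scope ring_scope.

Definition mindex (N : nat) (I : 'I_N -> nat) : finType :=
  {dffun forall k : 'I_N, 'I_(I k)}.

Section Tensors.
Variables (C : numClosedFieldType) (N : nat) (I : 'I_N -> nat).
Local Notation idx := (mindex I).

Definition tensor := idx -> idx -> C.
Definition tvector := idx -> C.

Definition tmul (A B : tensor) : tensor :=
  fun i j => \sum_(k : idx) A i k * B k j.

Definition tH (A : tensor) : tensor := fun i j => (A j i)^*.

Definition tid : tensor := fun i j => (i == j)%:R.

Definition tzero : tensor := fun _ _ => 0.

Definition hpd (M : tensor) : Prop :=
  tH M = M /\
  forall X : tvector, X <> (fun _ => 0) ->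
    0 < \sum_(i : idx) \sum_(j : idx) (X i)^* * M i j * X j.

Definition the_tensor (P : tensor -> Prop) : tensor :=
  epsilon (inhabits tzero) P.

Definition tinv (A : tensor) : tensor :=
  the_tensor (fun B => tmul A B = tid /\ tmul B A = tid).

Definition tsqrt (M : tensor) : tensor :=
  the_tensor (fun S => hpd S /\ tmul S S = M).

Definition tinvsqrt (M : tensor) : tensor := tinv (tsqrt M).

Definition wct (M A : tensor) : tensor := tmul (tmul (tinv M) (tH A)) M.

Definition is_wmp (M Nw A X : tensor) : Prop :=
  [/\ tmul (tmul A X) A = A,
      tmul (tmul X A) X = X,
      tH (tmul M (tmul A X)) = tmul M (tmul A X) &
      tH (tmul Nw (tmul X A)) = tmul Nw (tmul X A)].

Definition wmp (M Nw A : tensor) : tensor := the_tensor (is_wmp M Nw A).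

Definition mp (A : tensor) : tensor := wmp tid tid A.

End Tensors.

(* Main.v *)
Require Import Defs.
From HB Require Import structures.
From Stdlib Require Import ClassicalEpsilon FunctionalExtensionality PropExtensionality.
From mathcomp Require Import all_boot all_order all_algebra.
Set Implicit Arguments. Unset Strict Implicit. Unset Printing Implicit Defensive.
Import Order.TTheory GRing.Theory Num.Theory Num.Def.
Local Open Scope ring_scope.

Section Mx.
Variable C : numClosedFieldType.

Definition hmx m n (A : 'M[C]_(m, n)) : 'M[C]_(n, m) := map_mx conjC A^T.

Lemma hmxE m n (A : 'M[C]_(m, n)) i j : hmx A i j = (A j i)^*.
Proof. by rewrite !mxE. Qed.

Lemma hmxM m n p (A : 'M[C]_(m, n)) (B : 'M_(n, p)) :
  hmx (A *m B) = hmx B *m hmx A.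
Proof. by rewrite /hmx trmx_mul map_mxM. Qed.

Lemma hmxK m n (A : 'M[C]_(m, n)) : hmx (hmx A) = A.
Proof. by apply/matrixP=> i j; rewrite !mxE conjCK. Qed.

Lemma hmx1 n : hmx (1%:M : 'M[C]_n) = 1%:M.
Proof. by rewrite /hmx trmx1 map_mx1. Qed.

Lemma hmxV n (A : 'M[C]_n) : hmx (invmx A) = invmx (hmx A).
Proof. by rewrite /hmx trmx_inv map_invmx. Qed.

Lemma self0 k m (A : 'M[C]_(k, m)) : A *m hmx A = 0 -> A = 0.
Proof.
move=> H; apply/matrixP => i j; have := congr1 (fun M : 'M[C]_k => M i i) H.
rewrite !mxE.
under eq_bigr => l _ do rewrite hmxE -normCK.
move/psumr_eq0P => H2; have := H2 (fun l _ => exprn_ge0 2 (normr_ge0 _)) j isT.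
by move/eqP; rewrite expf_eq0 /= normr_eq0 => /eqP.
Qed.

Lemma gram_unit k m (G : 'M[C]_(k, m)) : row_free G -> G *m hmx G \in unitmx.
Proof.
move=> fG; rewrite -row_free_unit; apply/inj_row_free => v H.
have : (v *m G) *m hmx (v *m G) = 0.
  by rewrite hmxM mulmxA -(mulmxA v) H mul0mx.
by move/self0 => /eqP; rewrite mulmx_free_eq0 // => /eqP.
Qed.

Definition is_mpm n (A X : 'M[C]_n) := [/\ A *m X *m A = A, X *m A *m X = X,
  hmx (A *m X) = A *m X & hmx (X *m A) = X *m A].

Lemma mp_unique n (A X Y : 'M[C]_n) : is_mpm A X -> is_mpm A Y -> X = Y.
Proof.
case=> x1 x2 x3 x4 [y1 y2 y3 y4].
rewrite !hmxM in x3 x4 y3 y4.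
have hA1 : hmx A *m (hmx Y *m hmx A) = hmx A by rewrite -hmxM -hmxM y1.
have hA2 : hmx A *m hmx X *m hmx A = hmx A by rewrite -mulmxA -hmxM -hmxM x1.
have eX : X = X *m A *m Y.
  transitivity (X *m (hmx X *m hmx A)); first by rewrite x3 mulmxA x2.
  transitivity (X *m ((hmx X *m hmx A) *m (hmx Y *m hmx A))); first by rewrite -mulmxA hA1.
  by rewrite x3 y3 !mulmxA x2.
have eY : Y = X *m A *m Y.
  transitivity ((hmx A *m hmx Y) *m Y); first by rewrite y4 y2.
  transitivity (((hmx A *m hmx X) *m (hmx A *m hmx Y)) *m Y); first by rewrite !mulmxA hA2.
  by rewrite x4 y4 -!mulmxA (mulmxA Y) y2.
exact: (etrans eX (esym eY)).
Qed.

Lemma mp_sym n (A X : 'M[C]_n) : is_mpm A X -> is_mpm X A.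
Proof. by case=> *; split. Qed.

Lemma mp_H n (A X : 'M[C]_n) : is_mpm A X -> is_mpm (hmx A) (hmx X).
Proof.
case=> x1 x2 x3 x4; split.
- by rewrite -!hmxM mulmxA x1.
- by rewrite -!hmxM mulmxA x2.
- by rewrite -hmxM hmxK x4.
- by rewrite -hmxM hmxK x3.
Qed.

Lemma mp_gram n (B X : 'M[C]_n) : is_mpm B X -> is_mpm (hmx B *m B) (X *m hmx X).
Proof.
case=> x1 x2 x3 x4.
have x3' := x3; have x4' := x4.
rewrite !hmxM in x3' x4'.
have f1 : forall m (P : 'M[C]_(m, n)), P *m B *m X *m B = P *m B by move=> m P; rewrite -!mulmxA (mulmxA B) x1.
have f2 : forall m (P : 'M[C]_(m, n)), P *m X *m B *m X = P *m X by move=> m P; rewrite -!mulmxA (mulmxA X) x2.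
have f3 : forall m (P : 'M[C]_(m, n)), P *m hmx X *m hmx B = P *m B *m X by move=> m P; rewrite -!mulmxA x3'.
have f4 : forall m (P : 'M[C]_(m, n)), P *m hmx B *m hmx X = P *m X *m B by move=> m P; rewrite -!mulmxA x4'.
have MY : hmx B *m B *m (X *m hmx X) = X *m B.
  rewrite -[hmx B]mul1mx !mulmxA -(mulmxA _ B X) -x3' !mulmxA f4 f4 f1 mul1mx //.
have YM : X *m hmx X *m (hmx B *m B) = X *m B.
  by rewrite !mulmxA f3 f1.
split.
- by rewrite MY !mulmxA -x4' f3 f1.
- by rewrite YM !mulmxA x2.
- by rewrite MY x4.
- by rewrite YM x4.
Qed.

Lemma normal_mp n (B X : 'M[C]_n) : is_mpm B X ->
  B *m hmx B = hmx B *m B -> X *m hmx X = hmx X *m X.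
Proof.
move=> hX nB.
have h1 := mp_gram hX.
have h2 := mp_gram (mp_H hX); rewrite !hmxK nB in h2.
exact: (mp_unique h1 h2).
Qed.

Lemma mp_exists_fact n r (F : 'M[C]_(n, r)) (G : 'M[C]_(r, n)) :
  row_free G -> row_free (hmx F) -> exists X, is_mpm (F *m G) X.
Proof.
move=> fG fF.
have uG := gram_unit fG; have uF := gram_unit fF; rewrite hmxK in uF.
set P := invmx (G *m hmx G); set Q := invmx (hmx F *m F).
have hP : hmx P = P by rewrite /P hmxV hmxM hmxK.
have hQ : hmx Q = Q by rewrite /Q hmxV hmxM hmxK.
have GP : G *m hmx G *m P = 1%:M by rewrite mulmxV.
have QF : Q *m (hmx F *m F) = 1%:M by rewrite mulVmx.
clearbody P Q.
exists (hmx G *m P *m Q *m hmx F).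
have AX : F *m G *m (hmx G *m P *m Q *m hmx F) = F *m Q *m hmx F.
  by rewrite !mulmxA -(mulmxA F G) -(mulmxA F (G *m hmx G)) GP mulmx1.
have XA : (hmx G *m P *m Q *m hmx F) *m (F *m G) = hmx G *m P *m G.
  by rewrite !mulmxA -(mulmxA (hmx G *m P *m Q) (hmx F) F)
    -(mulmxA (hmx G *m P) Q) QF mulmx1.
split.
- rewrite AX !mulmxA -(mulmxA (F *m Q) (hmx F) F).
  by rewrite -(mulmxA F Q) QF mulmx1.
- rewrite XA !mulmxA -(mulmxA (hmx G *m P *m G) (hmx G) P).
  by rewrite -(mulmxA (hmx G *m P) G (hmx G *m P)) (mulmxA G) GP mulmx1.
- by rewrite AX !hmxM hmxK hQ !mulmxA.
- by rewrite XA !hmxM hmxK hP !mulmxA.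
Qed.

Lemma mp_exists n (A : 'M[C]_n) : exists X, is_mpm A X.
Proof.
have := @mp_exists_fact n _ (col_base A) (row_base A) (row_base_free A).
rewrite mulmx_base; apply.
by rewrite /row_free /hmx mxrank_map mxrank_tr; exact: col_base_full.
Qed.

Definition qf n (M : 'M[C]_n) (x : 'rV_n) := (x *m M *m hmx x) 0 0.
Definition posdef n (M : 'M[C]_n) := forall x : 'rV_n, x != 0 -> 0 < qf M x.

Lemma posdef_unit n (M : 'M[C]_n) : posdef M -> M \in unitmx.
Proof.
move=> pM; rewrite -row_free_unit; apply/inj_row_free => v H.
apply/eqP; apply: contraT => nz; have := pM v nz.
by rewrite /qf H mul0mx mxE ltxx.
Qed.

Lemma hmx_delta n (k : 'I_n) : hmx (delta_mx 0 k : 'rV[C]_n) = delta_mx k 0.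
Proof. by apply/matrixP => i j; rewrite !mxE rmorph_nat andbC. Qed.

Lemma sqrt_exists n (M : 'M[C]_n) : hmx M = M -> posdef M ->
  exists S, [/\ hmx S = S, posdef S & S *m S = M].
Proof.
move=> hM pM.
have nM : M \is normalmx.
  by apply/normalmxP; change (M *m hmx M = hmx M *m M); rewrite hM.
have eM0 := orthomx_spectralP nM.
have uP := spectral_unitarymx M.
move: eM0 uP; set P := spectralmx M; set d := spectral_diag M => eM0 uP.
move/orthomx_spectralP: nM; rewrite -/P -/d invmx_unitary // -/(hmx P) => eM.
have PP : P *m hmx P = 1%:M := unitarymxP uP.
have PP' : hmx P *m P = 1%:M.
  by rewrite -[hmx P]invmx_unitary // mulVmx // unitarymx_unit.
have E : P *m M *m hmx P = diag_mx d.
  rewrite eM !mulmxA PP mul1mx -mulmxA PP mulmx1 //.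
have dpos : forall k, 0 < d 0 k.
  move=> k.
  have nz : (delta_mx 0 k : 'rV[C]_n) *m P != 0.
    rewrite mulmx_free_eq0 ?row_free_unit ?unitarymx_unit //.
    apply/eqP => /matrixP /(_ 0 k); rewrite !mxE !eqxx /= => /eqP.
    by rewrite oner_eq0.
  have := pM _ nz; rewrite /qf hmxM.
  have -> : (delta_mx 0 k : 'rV[C]_n) *m P *m M *m (hmx P *m hmx (delta_mx 0 k : 'rV[C]_n)) =
    (delta_mx 0 k : 'rV[C]_n) *m diag_mx d *m hmx (delta_mx 0 k : 'rV[C]_n) by rewrite -E !mulmxA.
  by rewrite -rowE row_diag_mx hmx_delta -scalemxAl mul_delta_mx !mxE /= mulr1.
pose e := \row_k sqrtC (d 0 k).
have epos : forall k, 0 < e 0 k by move=> k; rewrite mxE sqrtC_gt0.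
have hD : hmx (diag_mx e) = diag_mx e.
  apply/matrixP => i j; rewrite hmxE !mxE eq_sym.
  case: eqP => [->|_]; last by rewrite !mulr0n; apply: conjC0.
  by rewrite !mulr1n; apply: geC0_conj; rewrite sqrtC_ge0 ltW.
exists (hmx P *m diag_mx e *m P); split.
- by rewrite !hmxM hmxK hD mulmxA.
- move=> x nz; rewrite /qf.
  set w := x *m hmx P.
  have -> : x *m (hmx P *m diag_mx e *m P) *m hmx x = w *m diag_mx e *m hmx w.
    by rewrite /w hmxM hmxK !mulmxA.
  have uhP : hmx P \in unitmx by case: (mulmx1_unit PP').
  have wnz : w != 0 by rewrite /w mulmx_free_eq0 ?row_free_unit.
  have [j wj] : exists j, w 0 j != 0.
    case: (pickP (fun j => w 0 j != 0)) => [j wj|Hn]; first by exists j.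
    by case/eqP: wnz; apply/rowP => j; move: (Hn j) => /= /negbFE /eqP ->; rewrite mxE.
  rewrite mxE.
  clearbody w e; under eq_bigr => i _ do rewrite mul_mx_diag !mxE [_ * e 0 i]mulrC -mulrA -normCK.
  rewrite (bigD1 j) //=.
  apply: (lt_le_trans (_ : 0 < e 0 j * `|w 0 j| ^+ 2)).
    by apply: mulr_gt0; rewrite // exprn_gt0 // normr_gt0.
  rewrite lerDl sumr_ge0 // => i _; apply: mulr_ge0; [exact/ltW | exact: exprn_ge0].
- rewrite !mulmxA -(mulmxA (hmx P *m diag_mx e) P (hmx P)) PP mulmx1.
  rewrite -(mulmxA (hmx P) (diag_mx e)) mulmx_diag eM; congr (_ *m diag_mx _ *m _).
  by apply/rowP => j; rewrite !mxE -expr2 sqrtCK.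
Qed.

End Mx.

Section Conj.
Variables (C : numClosedFieldType) (n : nat) (s : 'M[C]_n).
Hypotheses (hs : hmx s = s) (us : s \in unitmx).
Local Notation w := (invmx s).
Definition cjm (y : 'M[C]_n) := w *m y *m s.

Definition is_wmpm (M a x : 'M[C]_n) := [/\ a *m x *m a = a, x *m a *m x = x,
  hmx (M *m (a *m x)) = M *m (a *m x) & hmx (M *m (x *m a)) = M *m (x *m a)].

Lemma hw : hmx w = w. Proof. by rewrite hmxV hs. Qed.

Lemma cm y z : cjm y *m cjm z = cjm (y *m z).
Proof. by rewrite /cjm !mulmxA -(mulmxA (w *m y)) mulmxV // mulmx1. Qed.

Lemma cinj y z : (cjm y = cjm z) = (y = z).
Proof.
apply: propositional_extensionality; split => [|-> //]; rewrite /cjm => /(congr1 (mulmx s)) /(congr1 (mulmx^~ w)).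
by rewrite !mulmxA !mulmxV // !mul1mx -!mulmxA !mulmxV // !mulmx1.
Qed.

Lemma sxw y : s *m cjm y *m w = y.
Proof. by rewrite /cjm !mulmxA mulmxV // mul1mx -mulmxA mulmxV // mulmx1. Qed.

Lemma cjK y : cjm (s *m y *m w) = y.
Proof. by rewrite /cjm !mulmxA mulVmx // mul1mx -mulmxA mulVmx // mulmx1. Qed.

Lemma invss : invmx (s *m s) = w *m w.
Proof.
have uss : s *m s \in unitmx by rewrite unitmx_mul us.
rewrite -[invmx (s *m s)]mulmx1.
have -> : (1%:M : 'M_n) = s *m s *m (w *m w).
  by rewrite !mulmxA -(mulmxA s s w) mulmxV // mulmx1 mulmxV.
by rewrite mulmxA mulVmx // mul1mx.
Qed.

Lemma cj x : invmx (s *m s) *m hmx x *m (s *m s) = cjm (hmx (s *m x *m w)).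
Proof. by rewrite invss /cjm !hmxM hw hs !mulmxA. Qed.

Lemma herm_cj y : (hmx (s *m s *m cjm y) = s *m s *m cjm y) = (hmx y = y).
Proof.
apply: propositional_extensionality.
have -> : s *m s *m cjm y = s *m y *m s.
  by rewrite /cjm !mulmxA -(mulmxA s s w) mulmxV // mulmx1.
rewrite !hmxM hs mulmxA.
split => [|-> //] /(congr1 (mulmx w)) /(congr1 (mulmx^~ w)).
by rewrite !mulmxA !mulVmx // !mul1mx -!mulmxA !mulmxV // !mulmx1.
Qed.

Lemma wmp_cj b x : is_wmpm (s *m s) (cjm b) (cjm x) <-> is_mpm b x.
Proof.
rewrite /is_wmpm /is_mpm !cm !cinj !herm_cj.
by split; case=> *; split.
Qed.

End Conj.

Lemma main_mx (C : numClosedFieldType) n (s b p : 'M[C]_n) :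
  hmx s = s -> s \in unitmx -> is_mpm b p ->
  let a := cjm s b in let q := cjm s p in
  [/\ a = invmx (s *m s) *m hmx a *m (s *m s) <-> b = hmx b,
      a *m (invmx (s *m s) *m hmx a *m (s *m s)) =
      invmx (s *m s) *m hmx a *m (s *m s) *m a <->
      b *m hmx b = hmx b *m b,
      q *m (invmx (s *m s) *m hmx q *m (s *m s)) =
      invmx (s *m s) *m hmx q *m (s *m s) *m q <->
      p *m hmx p = hmx p *m p
    & a *m (invmx (s *m s) *m hmx a *m (s *m s)) =
      invmx (s *m s) *m hmx a *m (s *m s) *m a <->
      q *m (invmx (s *m s) *m hmx q *m (s *m s)) =
      invmx (s *m s) *m hmx q *m (s *m s) *m q].
Proof.
move=> hs us hp a q; rewrite /a /q !cj // !sxw // !cm // !cinj //.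
split => //; split; [exact: normal_mp | exact: normal_mp (mp_sym hp)].
Qed.

Section Tens.
Variables (C : numClosedFieldType) (N : nat) (I : 'I_N -> nat).
Local Notation idx := (mindex I).
Local Notation T := (tensor C I).

Lemma sum_idx (F : idx -> C) : \sum_(k : idx) F k = \sum_(i < #|idx|) F (enum_val i).
Proof. by rewrite -big_enum_val. Qed.

Definition tM (A : T) : 'M[C]_#|idx| := \matrix_(i, j) A (enum_val i) (enum_val j).
Definition oM (M : 'M[C]_#|idx|) : T := fun a b => M (enum_rank a) (enum_rank b).

Lemma tM_oM M : tM (oM M) = M.
Proof. by apply/matrixP => i j; rewrite !mxE /oM !enum_valK. Qed.

Lemma oM_tM A : oM (tM A) = A.
Proof.
apply: functional_extensionality => a; apply: functional_extensionality => b.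
by rewrite /oM !mxE !enum_rankK.
Qed.

Lemma tM_inj A B : tM A = tM B -> A = B.
Proof. by move=> H; rewrite -(oM_tM A) H oM_tM. Qed.

Lemma tM_eqE (A B : T) : (A = B) = (tM A = tM B).
Proof. by apply: propositional_extensionality; split => [->|/tM_inj]. Qed.

Lemma tM_mul A B : tM (tmul A B) = tM A *m tM B.
Proof.
apply/matrixP => i j; rewrite !mxE /tmul sum_idx; apply: eq_bigr => k _.
by rewrite !mxE.
Qed.

Lemma tM_H A : tM (tH A) = hmx (tM A).
Proof. by apply/matrixP => i j; rewrite hmxE !mxE. Qed.

Lemma tM_id : tM (@tid C N I) = 1%:M.
Proof. by apply/matrixP => i j; rewrite !mxE /tid (inj_eq (@enum_val_inj _ _)). Qed.

Lemma qf_tM (M : T) (X : tvector C I) :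
  \sum_(i : idx) \sum_(j : idx) (X i)^* * M i j * X j =
  qf (tM M) (\row_k (X (enum_val k))^*).
Proof.
rewrite /qf mxE; under [RHS]eq_bigr => j _ do rewrite hmxE !mxE big_distrl /=.
rewrite exchange_big sum_idx; apply: eq_bigr => i _; rewrite sum_idx.
by apply: eq_bigr => j _; rewrite !mxE conjCK.
Qed.

Lemma hpd_mx (M : T) : hpd M -> hmx (tM M) = tM M /\ posdef (tM M).
Proof.
case=> hM pM; split; first by rewrite -tM_H hM.
move=> x nz; pose X : tvector C I := fun a => (x 0 (enum_rank a))^*.
have Xnz : X <> (fun _ => 0).
  move=> H0; move/eqP: nz; apply; apply/rowP => k.
  have := congr1 (fun f => f (enum_val k)) H0; rewrite /X enum_valK /= => /eqP.
  by rewrite conjC_eq0 => /eqP ->; rewrite mxE.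
have := pM X Xnz; rewrite qf_tM.
have -> // : \row_k (X (enum_val k))^* = x.
by apply/rowP => k; rewrite mxE /X enum_valK conjCK.
Qed.

Lemma mx_hpd (M : T) : hmx (tM M) = tM M -> posdef (tM M) -> hpd M.
Proof.
move=> hM pM; split; first by apply: tM_inj; rewrite tM_H.
move=> X nz; rewrite qf_tM; apply: pM.
apply/eqP => H0; apply: nz; apply: functional_extensionality => a.
have := congr1 (fun r : 'rV[C]_#|idx| => r 0 (enum_rank a)) H0.
by rewrite !mxE enum_rankK => /eqP; rewrite conjC_eq0 => /eqP.
Qed.

Lemma the_tensorP (P : T -> Prop) : (exists X, P X) -> P (the_tensor P).
Proof. exact: epsilon_spec. Qed.

Lemma tM_tinv S : tM S \in unitmx -> tM (tinv S) = invmx (tM S).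
Proof.
move=> uS.
have : tmul S (tinv S) = (@tid C N I) /\ tmul (tinv S) S = (@tid C N I).
  apply: (@the_tensorP (fun B => tmul S B = (@tid C N I) /\ tmul B S = (@tid C N I))).
  exists (oM (invmx (tM S))).
  by split; apply: tM_inj; rewrite tM_mul tM_oM tM_id ?mulmxV ?mulVmx.
case=> _ /(congr1 tM); rewrite tM_mul tM_id => h.
by rewrite -[tM (tinv S)]mulmx1 -(mulmxV uS) mulmxA h mul1mx.
Qed.

Lemma tsqrt_spec (Nt : T) : hpd Nt ->
  [/\ hmx (tM (tsqrt Nt)) = tM (tsqrt Nt), tM (tsqrt Nt) \in unitmx
    & tM (tsqrt Nt) *m tM (tsqrt Nt) = tM Nt].
Proof.
move=> hN; have [hM pM] := hpd_mx hN.
have [S [hS pS SS]] := sqrt_exists hM pM.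
have : hpd (tsqrt Nt) /\ tmul (tsqrt Nt) (tsqrt Nt) = Nt.
  apply: (@the_tensorP (fun S => hpd S /\ tmul S S = Nt)); exists (oM S); split.
    by apply: mx_hpd; rewrite tM_oM.
  by apply: tM_inj; rewrite tM_mul tM_oM.
case=> /hpd_mx [h1 p1] e1; split => //; first exact: posdef_unit.
by rewrite -tM_mul e1.
Qed.

Lemma tM_mp (B : T) : is_mpm (tM B) (tM (mp B)).
Proof.
have [X HX] := mp_exists (tM B).
have : is_wmp ((@tid C N I)) ((@tid C N I)) B (mp B).
  apply: (@the_tensorP (is_wmp (@tid C N I) (@tid C N I) B)); exists (oM X).
  rewrite /is_wmp !tM_eqE !tM_H !tM_mul tM_id tM_oM !mul1mx.
  by case: HX => *; split.
rewrite /is_wmp !tM_eqE !tM_H !tM_mul tM_id !mul1mx.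
by case=> *; split.
Qed.

End Tens.

Unset Implicit Arguments.
Set Strict Implicit.

Theorem theorem4p4 (C : numClosedFieldType) (N : nat) (I : 'I_N -> nat)
  (A Nt : tensor C I) (hN : hpd Nt) :
  let At := tmul (tmul (tsqrt Nt) A) (tinvsqrt Nt) in
  [/\ A = wct Nt A <-> At = tH At,
      tmul A (wct Nt A) = tmul (wct Nt A) A <->
        tmul At (tH At) = tmul (tH At) At,
      tmul (wmp Nt Nt A) (wct Nt (wmp Nt Nt A)) =
        tmul (wct Nt (wmp Nt Nt A)) (wmp Nt Nt A) <->
        tmul (mp At) (tH (mp At)) = tmul (tH (mp At)) (mp At) &
      tmul A (wct Nt A) = tmul (wct Nt A) A <->
        tmul (wmp Nt Nt A) (wct Nt (wmp Nt Nt A)) =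
        tmul (wct Nt (wmp Nt Nt A)) (wmp Nt Nt A)].
Proof.
move=> At.
have [hS uS SS] := tsqrt_spec hN.
have uN : tM Nt \in unitmx by rewrite -SS unitmx_mul uS.
have eW : tM (tinvsqrt Nt) = invmx (tM (tsqrt Nt)) := tM_tinv uS.
have eNi : tM (tinv Nt) = invmx (tM Nt) := tM_tinv uN.
have hp := tM_mp At.
rewrite /wct !tM_eqE !tM_H !tM_mul !tM_H !tM_mul eNi.
rewrite /At !tM_mul eW -SS in hp *.
move: hp.
set s := tM (tsqrt Nt); set a := tM A; set p := tM (mp _); set q := tM (wmp _ _ _).
move=> hp.
have ea : a = cjm s (s *m a *m invmx s) by rewrite cjK.
have hw : is_wmp Nt Nt A (wmp Nt Nt A).
  apply: (the_tensorP (P := is_wmp Nt Nt A)); exists (oM (cjm s p)).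
  rewrite /is_wmp !tM_eqE !tM_H !tM_mul tM_oM -SS -/a.
  have := (wmp_cj hS uS (s *m a *m invmx s) p).2 hp; rewrite -ea.
  by case=> *; split.
move: hw; rewrite /is_wmp !tM_eqE !tM_H !tM_mul -SS -/a -/q => hw.
have hw' : is_wmpm (s *m s) a q by case: hw => *; split.
have hw2 : is_wmpm (s *m s) (cjm s (s *m a *m invmx s)) (cjm s (s *m q *m invmx s)).
  by rewrite !cjK.
have hq : q = cjm s p.
  rewrite -[LHS](cjK uS); congr (cjm s _).
  exact: (mp_unique ((wmp_cj hS uS _ _).1 hw2) hp).
have := main_mx hS uS hp; rewrite -ea -hq; exact.
Qed.
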